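(* Let $G$ be a finite group, $p$ a prime, and let $P$ be a Sylow $p$-subgroup of $G$. If $P/O_p(G)$ is cyclic, then $G$ does not have a redundant Sylow $p$-subgroup.
   Context: $O_p(G)$ denotes the largest normal $p$-subgroup of $G$. For a finite group $G$ and a prime $p$, $G_p$ denotes the set of $p$-elements of $G$ and $\mathrm{Syl}_p(G)$ the set of Sylow $p$-subgroups of $G$. $G$ is said to have a redundant Sylow $p$-subgroup if $G_p$ is contained in the union of the members of some proper subset of $\mathrm{Syl}_p(G)$. *)

(* Defs.v *)
From mathcomp Require Import all_boot all_fingroup all_solvable.
Set Implicit Arguments. Unset Strict Implicit. Unset Printing Implicit Defensive.
Local Open Scope group_scope.

Definition p_elements (gT : finGroupType) (p : nat) (G : {set gT}) : {set gT} :=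
  [set x in G | p.-elt x].

Definition has_redundant_Sylow (gT : finGroupType) (p : nat) (G : {set gT}) : Prop :=
  exists S : {set {group gT}},
    S \proper 'Syl_p(G) /\ p_elements p G \subset \bigcup_(Q in S) Q.

(* Main.v *)
Require Import Defs.
From mathcomp Require Import all_boot all_fingroup all_solvable.
Local Open Scope group_scope.

Theorem corollary2p3 (gT : finGroupType) (G P : {group gT}) (p : nat) :
  prime p -> P \in 'Syl_p(G) -> cyclic (P / 'O_p(G)) ->
  ~ has_redundant_Sylow p G.
Proof.
move=> pr_p; rewrite inE => sylP cycP [S [/properP [sSyl [Q SylQ notSQ]] cover]].
have sylQ : p.-Sylow(G) Q by move: SylQ; rewrite inE.
have [g Gg defQ] := Sylow_trans sylP sylQ.
set O := 'O_p(G).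
have nOG : G \subset 'N(O) by apply: normal_norm; apply: pcore_normal.
have nOQ : Q \subset 'N(O) := subset_trans (pHall_sub sylQ) nOG.
have cycQ : cyclic (Q / O).
  by rewrite defQ quotientJ ?(subsetP nOG) // cyclicJ.
have [y defy] := cyclicP cycQ.
have : y \in Q / O by rewrite defy cycle_id.
case/morphimP => x Nx Qx eyx; subst y.
have px : p.-elt x := mem_p_elt (pHall_pgroup sylQ) Qx.
have : x \in p_elements p G by rewrite inE (subsetP (pHall_sub sylQ)) // px.
move/(subsetP cover)/bigcupP => [R SR Rx].
have sylR : p.-Sylow(G) R by move: (subsetP sSyl R SR); rewrite inE.
have sOR : O \subset R := pcore_sub_Hall sylR.
have sQR : Q \subset R.
  rewrite -(quotientSGK nOQ sOR) defy -quotient_cycle //.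
  by apply: quotientS; rewrite cycle_subG.
have eQR : Q = R.
  apply: group_inj; apply/eqP; rewrite eqEcard sQR /=.
  by rewrite (card_Hall sylQ) (card_Hall sylR).
by rewrite eQR SR in notSQ.
Qed.
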